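(* For all integers $n\ge1$, $k\ge1$ and $0\le p\le n$, $$\sum_{j=0}^p(-1)^j\binom{n-j}{p-j}\binom{n+k-j}{k}\binom{n+1}{j}=\binom{n+k-p}{k}\binom{k-1}{p}=\sum_{s=p}^n\binom{s}{p}\binom{k-1}{s}\binom{n+1}{n-s}.$$ *)

(* Defs.v *)
From mathcomp Require Import all_boot all_order all_algebra.

(* Main.v *)
Require Import Defs.
From mathcomp Require Import all_boot all_order all_algebra.
From mathcomp Require Import ring zify.
Import GRing.Theory.
Import GRing.Theory.
Lemma binmul a b c : (c <= b)%N ->
  ('C(a, b) * 'C(b, c) = 'C(a, c) * 'C(a - c, b - c))%N.
Proof.
move=> cb; case: (leqP b a) => ba; last first.
  rewrite bin_small // mul0n; case: (leqP c a) => ca.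
    by rewrite (@bin_small (a - c)) ?muln0 //; lia.
  by rewrite bin_small.
have F : (0 < c`! * (b - c)`! * (a - b)`!)%N by rewrite !muln_gt0 !fact_gt0.
apply/eqP; rewrite -(eqn_pmul2r F); apply/eqP.
have e1 := bin_fact ba. have e2 := bin_fact cb.
have ca : (c <= a)%N by lia.
have e3 := bin_fact ca.
have bca : (b - c <= a - c)%N by lia.
have e4 := bin_fact bca.
have ee : (a - c - (b - c) = a - b)%N by lia.
rewrite ee in e4.
transitivity ('C(a, b) * ('C(b, c) * (c`! * (b - c)`!)) * (a - b)`!)%N; first by ring.
rewrite e2.
transitivity ('C(a, b) * (b`! * (a - b)`!))%N; first by ring.
rewrite e1 -e3.
transitivity ('C(a, c) * c`! * ('C(a - c, b - c) * ((b - c)`! * (a - b)`!)))%N; last by ring.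
by rewrite e4; ring.
Qed.
Local Open Scope ring_scope.
Lemma altsum N M p : (N <= M)%N ->
  \sum_(j < p.+1) (-1) ^+ j * ('C(N, j) * 'C(M - j, p - j))%:R
  = 'C(M - N, p)%:R :> int.
Proof.
elim: N M p => [|N IH] M p le.
  rewrite big_ord_recl big1 ?addr0 ?subn0 ?mul1r ?bin0 ?mul1n ?expr0 //.
  by move=> i _; rewrite bin0n /= mul0n mulr0.
case: M le => [//|M] le.
case: p => [|q].
  by rewrite big_ord_recl big_ord0 !bin0 addr0 expr0 mul1r.
have E1 := IH M.+1 q.+1 (ltnW le).
have E2 := IH M q le.
rewrite big_ord_recl in E1.
rewrite big_ord_recl /=.
under eq_bigr => i _ do rewrite /bump /= add1n binS subSS subSS mulnDl natrD mulrDr.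
rewrite big_split /= addrA.
have E1' : 'C(M.+1, q.+1)%:R + \sum_(i < q.+1) (-1) ^+ i.+1 * ('C(N, i.+1) * 'C(M - i, q - i))%:R = 'C(M.+1 - N, q.+1)%:R :> int.
  rewrite -E1 /= subn0 bin0 mul1n expr0 mul1r; congr (_ + _).
rewrite subSS.
have -> : 'C(M - N, q.+1)%:R = 'C(M.+1 - N, q.+1)%:R - 'C(M - N, q)%:R :> int.
  by rewrite subSn // binS natrD addrK.
rewrite -E1' -E2 subn0 bin0 mul1n expr0 mul1r.
rewrite -!addrA; congr (_ + (_ + _)).
rewrite -sumrN; apply: eq_bigr => i _.
by rewrite exprS mulN1r mulNr.
Qed.

Lemma binsw N k : (k <= N)%N -> 'C(N, k) = 'C(N, N - k).
Proof. by move=> h; rewrite bin_sub. Qed.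

Theorem mainTheorem6 (n k p : nat) (hn : (1 <= n)%N) (hk : (1 <= k)%N)
    (hp : (p <= n)%N) :
  (\sum_(0 <= j < p.+1)
      (-1) ^+ j * ('C(n - j, p - j) * 'C(n + k - j, k) * 'C(n.+1, j))%:R
    = ('C(n + k - p, k) * 'C(k - 1, p))%:R :> int)
  /\
  ('C(n + k - p, k) * 'C(k - 1, p)
    = \sum_(p <= s < n.+1) 'C(s, p) * 'C(k - 1, s) * 'C(n.+1, n - s))%N.
Proof.
split.
  rewrite big_mkord.
  have E : forall j : 'I_p.+1, ('C(n - j, p - j) * 'C(n + k - j, k) * 'C(n.+1, j)
     = 'C(n.+1, j) * 'C(n + k - j, p - j) * 'C(n + k - p, k))%N.
    move=> j; have jp := ltn_ord j.
    rewrite (@binsw (n + k - j) k); last lia.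
    rewrite (_ : (n + k - j - k = n - j)%N); last lia.
    rewrite [('C(n - j, _) * _)%N]mulnC binmul; last lia.
    rewrite (_ : (n + k - j - (p - j) = n + k - p)%N); last lia.
    rewrite (_ : (n - j - (p - j) = n - p)%N); last lia.
    rewrite (@binsw (n + k - p) k); last lia.
    rewrite (_ : (n + k - p - k = n - p)%N); last lia.
    by rewrite mulnC mulnA.
  under eq_bigr => j _ do rewrite E natrM mulrA.
  rewrite -mulr_suml altsum; last lia.
  rewrite (_ : (n + k - n.+1 = k - 1)%N); last lia.
  by rewrite natrM mulrC.
rewrite (big_addn 0 n.+1 p) big_mkord.
rewrite (_ : (n.+1 - p = (n - p).+1)%N); last lia.
have H t : (n - (t + p) = n - p - t)%N by lia.
under eq_bigr => t _ do rewrite [('C(t + p, p) * _)%N]mulnC binmul ?leq_addl // addnK -mulnA H.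
rewrite -big_distrr /= binomial.Vandermonde mulnC.
case: (leqP p (k - 1)) => pk; last by rewrite bin_small.
rewrite (_ : (k - 1 - p + n.+1 = n + k - p)%N); last lia.
rewrite (@binsw (n + k - p) k); last lia.
by rewrite (_ : (n + k - p - k = n - p)%N); last lia.
Qed.
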